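(* Fix $\lambda^\sharp>0$ and let $(\gamma^\sharp,\lambda^\sharp)$ and $(\gamma^\flat,\lambda^\sharp)$ be two eligible pairs. Then $\|\Sigma_{-1,-1}^{1/2}(\gamma^\sharp-\gamma^\flat)\|_2^2\to0$.
   Context: Asymptotic framework: all quantities may depend on $n$; limits as $n\to\infty$. $\mathbf{x}=(\mathbf{x}_1,\dots,\mathbf{x}_p)$ is a zero-mean Gaussian row vector with nonsingular covariance $\Sigma$; $\mathbf{x}_{-1}=(\mathbf{x}_2,\dots,\mathbf{x}_p)$, $\Sigma_{-1,-1}=\mathbb{E}\mathbf{x}_{-1}^T\mathbf{x}_{-1}$, $\gamma^0:=\Sigma_{-1,-1}^{-1}\mathbb{E}\mathbf{x}_{-1}^T\mathbf{x}_1$. A pair $(\gamma,\lambda)$ with $\gamma\in\mathbb{R}^{p-1}$, $\lambda>0$ is eligible if $\|\Sigma_{-1,-1}(\gamma-\gamma^0)\|_\infty\le\lambda$ and $\lambda\|\gamma\|_1\to0$. *)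

(* Defs.v *)
From mathcomp Require Import all_boot all_order all_algebra.
From mathcomp Require Import all_classical all_reals all_analysis.
Set Implicit Arguments. Unset Strict Implicit. Unset Printing Implicit Defensive.
Import Order.TTheory GRing.Theory Num.Theory.
Local Open Scope classical_set_scope.
Local Open Scope ring_scope.

(* Coordinates are indexed 0..q with q = p - 1; coordinate 0 is x_1, the
   block of coordinates 1..q is x_{-1}.  A covariance matrix is a p x p
   matrix with p = 1 + q. *)

Definition norm1 (R : realType) (q : nat) (v : 'cV[R]_q) : R :=
  \sum_(i < q) `|v i 0|.

Definition normInf (R : realType) (q : nat) (v : 'cV[R]_q) : R :=
  \big[Num.max/0]_(i < q) `|v i 0|.

(** Sigma is the (nonsingular) covariance matrix of a zero-mean Gaussian
    vector: symmetric, positive semidefinite and invertible.  (Every such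
    matrix is the covariance of a nondegenerate Gaussian and conversely.) *)
Definition nonsingular_cov (R : realType) (q : nat) (S : 'M[R]_(1 + q)) : Prop :=
  S^T = S /\ (forall v : 'cV[R]_(1 + q), 0 <= (v^T *m S *m v) 0 0) /\ S \in unitmx.

Definition Sig_mm (R : realType) (q : nat) (S : 'M[R]_(1 + q)) : 'M[R]_q :=
  drsubmx (S : 'M[R]_(1 + q, 1 + q)).

(** E x_{-1}^T x_1 *)
Definition Sig_m1 (R : realType) (q : nat) (S : 'M[R]_(1 + q)) : 'cV[R]_q :=
  dlsubmx (S : 'M[R]_(1 + q, 1 + q)).

Definition gamma0 (R : realType) (q : nat) (S : 'M[R]_(1 + q)) : 'cV[R]_q :=
  invmx (Sig_mm S) *m Sig_m1 S.

Definition eligible (R : realType) (q : nat -> nat)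
    (S : forall n, 'M[R]_(1 + q n)) (g : forall n, 'cV[R]_(q n)) (lam : nat -> R)
    : Prop :=
  (forall n, 0 < lam n) /\
  (forall n, normInf (Sig_mm (S n) *m (g n - gamma0 (S n))) <= lam n) /\
  ((fun n => lam n * norm1 (g n)) @ \oo -->  0).

(** || Sigma_{-1,-1}^{1/2} d ||_2^2, written out as d^T Sigma_{-1,-1} d *)
Definition sq_Snorm (R : realType) (q : nat) (S : 'M[R]_(1 + q)) (d : 'cV[R]_q) : R :=
  (d^T *m Sig_mm S *m d) 0 0.

(* Main.v *)
Require Import Defs.
From mathcomp Require Import all_boot all_order all_algebra.
From mathcomp Require Import all_classical all_reals all_analysis.
From mathcomp Require Import lra.
Import Order.TTheory GRing.Theory Num.Theory.
Local Open Scope classical_set_scope.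
Local Open Scope ring_scope.

Lemma normInf_ge (R : realType) (q : nat) (v : 'cV[R]_q) i : `|v i 0| <= normInf v.
Proof. rewrite /normInf; exact: (le_bigmax _ (fun i => `|v i 0|)). Qed.

Lemma dot_le (R : realType) (q : nat) (u v : 'cV[R]_q) :
  (u^T *m v) 0 0 <= norm1 u * normInf v.
Proof.
rewrite mxE /norm1 mulr_suml.
apply: (le_trans (ler_norm _)); apply: (le_trans (ler_norm_sum _ _ _)).
apply: ler_sum => i _; rewrite mxE normrM; apply: ler_wpM2l => //.
exact: normInf_ge.
Qed.

Lemma norm1_sub (R : realType) (q : nat) (u v : 'cV[R]_q) :
  norm1 (u - v) <= norm1 u + norm1 v.
Proof.
rewrite /norm1 -big_split /=; apply: ler_sum => i _.
by rewrite !mxE; apply: (le_trans (ler_normB _ _)).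
Qed.

Lemma norm1_ge0 (R : realType) (q : nat) (u : 'cV[R]_q) : 0 <= norm1 u.
Proof. by apply: sumr_ge0 => i _. Qed.

Lemma psd_sub (R : realType) (q : nat) (S : 'M[R]_(1 + q)) d :
  nonsingular_cov S -> 0 <= sq_Snorm S d.
Proof.
move=> [_ [H _]]; have := H (col_mx 0 d).
rewrite /sq_Snorm /Sig_mm tr_col_mx -{1}(submxK S).
rewrite mul_row_block mul_row_col.
by rewrite trmx0 !mul0mx !add0r mulmx0 add0r.
Qed.

Theorem lemma3p1 (R : realType) (q : nat -> nat)
    (S : forall n, 'M[R]_(1 + q n))
    (lam : nat -> R) (gs gf : forall n, 'cV[R]_(q n)) :
  (forall n, nonsingular_cov (S n)) ->
  (forall n, 0 < lam n) ->
  eligible S gs lam -> eligible S gf lam ->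
  (fun n => sq_Snorm (S n) (gs n - gf n)) @ \oo -->  0.
Proof.
move=> Hc Hl [_ [Hs Cs]] [_ [Hf Cf]].
apply: (@squeeze_cvgr _ _ _ _ (fun _ => 0)
   (fun n => 2 * (lam n * norm1 (gs n) + lam n * norm1 (gf n)))).
- near=> n; apply/andP; split; first exact: psd_sub.
  set d := gs n - gf n.
  have E : sq_Snorm (S n) d =
     (d^T *m (Sig_mm (S n) *m (gs n - gamma0 (S n)))) 0 0 -
     (d^T *m (Sig_mm (S n) *m (gf n - gamma0 (S n)))) 0 0.
    rewrite /sq_Snorm -mulmxA.
    have -> : d = gs n - gamma0 (S n) - (gf n - gamma0 (S n)).
      by rewrite /d opprB addrA subrK.
    by rewrite !mulmxBr !mxE.
  rewrite E.
  set M1 := Sig_mm (S n) *m (gs n - gamma0 (S n)).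
  set M2 := Sig_mm (S n) *m (gf n - gamma0 (S n)).
  have h1 := @dot_le _ _ d M1.
  have h2 := @dot_le _ _ d (- M2).
  have e2 : normInf (- M2) = normInf M2.
    by rewrite /normInf; apply: eq_bigr => i _; rewrite mxE normrN.
  have e3 : (d^T *m - M2) 0 0 = - (d^T *m M2) 0 0 by rewrite mulmxN mxE.
  rewrite e2 e3 in h2.
  have N1 := @norm1_sub _ _ (gs n) (gf n). have N0 := @norm1_ge0 _ _ d.
  have A := Hs n. have B := Hf n. rewrite -/M1 in A. rewrite -/M2 in B.
  have Z1 := @norm1_ge0 _ _ (gs n). have Z2 := @norm1_ge0 _ _ (gf n).
  have l0 := Hl n.
  move: h1 h2; set a := (d^T *m M1) 0 0; set b := (d^T *m M2) 0 0 => h1 h2.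
  have K1 : norm1 d * normInf M1 <= norm1 d * lam n by apply: ler_wpM2l.
  have K2 : norm1 d * normInf M2 <= norm1 d * lam n by apply: ler_wpM2l.
  have K3 : norm1 d * lam n <= (norm1 (gs n) + norm1 (gf n)) * lam n.
    by apply: ler_wpM2r => //; apply: ltW.
  rewrite -/d in N1.
  nra.
- first [exact: (@cvg_cst R _ nat _ _) | exact: (@cvg_cst R^o _ nat _ _) | (apply: cvg_near_cst; exact: nearW) ].
- rewrite -(mulr0 2) -(addr0 0); apply: cvgMr; exact: cvgD.
Unshelve. all: end_near.
Qed.
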